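(* Let $(A,\circ)$ be an anti-pre-Lie algebra with sub-adjacent Lie algebra $(A,[-,-])$, $[x,y]=x\circ y-y\circ x$. Then there exists a nondegenerate bilinear form $\mathcal B$ on $A$ which is invariant on $(A,\circ)$, i.e. $\mathcal B(x\circ y,z)=\mathcal B(y,[x,z])$ for all $x,y,z\in A$, if and only if the representations $(-\mathcal L_\circ,A)$ and $(\mathrm{ad}^*,A^* )$ of the Lie algebra $(A,[-,-])$ are equivalent.
   Context: All vector spaces are finite-dimensional over a field $\mathbb F$ of characteristic $0$. An anti-pre-Lie algebra is a vector space $A$ with a bilinear operation $\circ$ such that, writing $[x,y]=x\circ y-y\circ x$, for all $x,y,z\in A$: (i) $x\circ(y\circ z)-y\circ(x\circ z)=[y,x]\circ z$, and (ii) $[x,y]\circ z+[y,z]\circ x+[z,x]\circ y=0$; then $(A,[-,-])$ is a Lie algebra. $\mathcal L_\circ(x)y=x\circ y$; $(-\mathcal L_\circ,A)$ is a representation of $(A,[-,-])$. $\mathrm{ad}^*$ is the coadjoint representation: $\langle \mathrm{ad}^*(x)a^*,y\rangle=-\langle a^*,[x,y]\rangle$. Two representations $(\rho_1,V_1),(\rho_2,V_2)$ are equivalent if there is a linear isomorphism $\varphi:V_1\to V_2$ with $\varphi(\rho_1(x)v)=\rho_2(x)\varphi(v)$. *)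

(* Defs.v *)
From HB Require Import structures.
From mathcomp Require Import all_boot all_order all_algebra.
Set Implicit Arguments. Unset Strict Implicit. Unset Printing Implicit Defensive.
Import GRing.Theory.
Local Open Scope ring_scope.

Section AntiPreLie.
Variables (F : fieldType) (V : vectType F).

Definition bilinear_op (mul : V -> V -> V) : Prop :=
  (forall (a : F) x y z, mul (a *: x + y) z = a *: mul x z + mul y z) /\
  (forall (a : F) x y z, mul z (a *: x + y) = a *: mul z x + mul z y).

Definition lie_bracket (mul : V -> V -> V) (x y : V) : V := mul x y - mul y x.

Definition anti_pre_Lie (mul : V -> V -> V) : Prop :=
  bilinear_op mul /\
  (forall x y z, mul x (mul y z) - mul y (mul x z) = mul (lie_bracket mul y x) z) /\
  (forall x y z, mul (lie_bracket mul x y) z + mul (lie_bracket mul y z) x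
                 + mul (lie_bracket mul z x) y = 0).

Definition is_bilinear_form (B : V -> V -> F) : Prop :=
  (forall (a : F) x y z, B (a *: x + y) z = a * B x z + B y z) /\
  (forall (a : F) x y z, B z (a *: x + y) = a * B z x + B z y).

Definition is_nondegenerate (B : V -> V -> F) : Prop :=
  forall x, (forall y, B x y = 0) -> x = 0.

Definition is_invariant_form (mul : V -> V -> V) (B : V -> V -> F) : Prop :=
  forall x y z, B (mul x y) z = B y (lie_bracket mul x z).

Definition dualV := 'Hom(V, F^o).

Definition coadjoint (mul : V -> V -> V) (x : V) (f : dualV) : dualV :=
  linfun (fun y : V => - f (lie_bracket mul x y) : F^o).

Definition neg_left_mult (mul : V -> V -> V) (x v : V) : V := - mul x v.

End AntiPreLie.

Definition equivalent_reps (F : fieldType) (L W1 W2 : lmodType F)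
  (rho1 : L -> W1 -> W1) (rho2 : L -> W2 -> W2) : Prop :=
  exists phi : W1 -> W2,
    linear phi /\ bijective phi /\
    forall x v, phi (rho1 x v) = rho2 x (phi v).

(* Main.v *)
Require Import Defs.
From HB Require Import structures.
From mathcomp Require Import all_boot all_order all_algebra.
Local Open Scope ring_scope.
Import GRing.Theory.

Section Helper.
Variables (F : fieldType) (aT rT : vectType F) (f : aT -> rT).
Hypothesis Hf : linear f.
HB.instance Definition _ := GRing.isLinear.Build F aT rT *:%R f Hf.
Lemma lfunE_lin : linfun f =1 f.
Proof. exact: lfunE. Qed.
End Helper.

Lemma dim_dual (F : fieldType) (V : vectType F) : dim 'Hom(V, F^o) = dim V.
Proof.
have ->: dim 'Hom(V, F^o) = (dim V * dim F^o)%N by [].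
have ->: dim F^o = 1%N by []. by rewrite muln1.
Qed.

Theorem proposition2p24 (F : fieldType) (V : vectType F)
  (mul : V -> V -> V) :
  [pchar F] =i pred0 ->
  anti_pre_Lie mul ->
  (exists B : V -> V -> F,
      is_bilinear_form B /\ is_nondegenerate B /\ is_invariant_form mul B)
  <->
  equivalent_reps (neg_left_mult mul) (coadjoint mul).
Proof.
move=> _ [[mulL mulR] _].
have linbr : forall x, linear (lie_bracket mul x).
  move=> x a u w; rewrite /lie_bracket mulR mulL.
  by rewrite opprD addrACA -scalerBr.
have coadE : forall x (g : dualV V) y,
    coadjoint mul x g y = - g (lie_bracket mul x y).
  move=> x g y; rewrite /coadjoint lfunE_lin //.
  move=> a u w /=; rewrite linbr linearP /= opprD; congr (_ + _).
  by rewrite -scalerN.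
split.
- move=> [B [[Bl Br] [Bnd Binv]]].
  have linB : forall v, linear (B v : V -> F^o).
    by move=> v a u w; rewrite Br.
  pose f := fun v => linfun (B v : V -> F^o) : dualV V.
  have fE : forall v y, f v y = B v y by move=> v y; rewrite /f lfunE_lin.
  have linf : linear f.
    move=> a u w; apply/lfunP => y.
    by rewrite add_lfunE scale_lfunE !fE Bl.
  pose phi := linfun f : 'Hom(V, dualV V).
  have phiE : forall v, phi v = f v by move=> v; rewrite /phi lfunE_lin.
  have ker0 : lker phi == 0%VS.
    apply/lker0P => u w; rewrite !phiE => e.
    have : B (u - w) =1 (fun _ => 0).
      move=> y; have := congr1 (fun g : dualV V => g y) e; rewrite /= !fE => e'.
      have -> : u - w = (-1) *: w + u by rewrite scaleN1r addrC.
      by rewrite Bl e' mulN1r addNr.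
    by move/Bnd/eqP; rewrite subr_eq0 => /eqP.
  have img : limg phi = fullv.
    apply/eqP; rewrite eqEdim subvf /= limg_dim_eq; last first.
      by rewrite (eqP ker0) capv0.
    by rewrite !dimvf dim_dual.
  exists f; split; first exact: linf.
  split.
    apply: (@Bijective _ _ f (phi^-1)%VF).
      by move=> v; rewrite -phiE lker0_lfunK.
    by move=> g; rewrite -phiE limg_lfunVK // img memvf.
  move=> x v; apply/lfunP => y.
  rewrite coadE !fE /neg_left_mult.
  have -> : - mul x v = (-1) *: mul x v + 0 by rewrite addr0 scaleN1r.
  have B0 : B 0 y = 0.
    by have := Bl (-1) 0 0 y; rewrite scaleN1r oppr0 addr0 mulN1r addNr.
  by rewrite Bl Binv mulN1r B0 addr0.
- move=> [phi [linphi [[psi psiK phiK] Hphi]]].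
  have phi0 : phi 0 = 0.
    by have := linphi (-1) 0 0; rewrite scaleN1r oppr0 addr0 scaleN1r addNr.
  have phiN : forall v, phi (- v) = - phi v.
    move=> v; have := linphi (-1) v 0; rewrite addr0 scaleN1r => ->.
    by rewrite phi0 addr0 scaleN1r.
  exists (fun u v => phi u v); split; [split|split].
  + move=> a x y z; rewrite linphi add_lfunE scale_lfunE //.
  + move=> a x y z; by rewrite linearP.
  + move=> x Hx.
    have : phi x = phi 0 by apply/lfunP => y; rewrite Hx phi0 zero_lfunE.
    by move/(can_inj psiK).
  + move=> x y z.
    have := congr1 (fun g : dualV V => g z) (Hphi x y).
    rewrite /= coadE /neg_left_mult phiN opp_lfunE => e.
    by rewrite -[LHS]opprK e opprK.
Qed.
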